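(* Let $\mathfrak{g}$ be a finite-dimensional real Lie algebra and let $((\Lambda^3\mathfrak{g})^{\mathfrak{g}})^\circ\subset(\Lambda^3\mathfrak{g})^*$ be the annihilator of $(\Lambda^3\mathfrak{g})^{\mathfrak{g}}$. The functions $f_\upsilon:r\in\Lambda^2\mathfrak{g}\mapsto\upsilon([r,r])\in\mathbb{R}$, $\upsilon\in((\Lambda^3\mathfrak{g})^{\mathfrak{g}})^\circ$, span a linear Darboux family for $V_{\mathfrak{g}}$ on $\Lambda^2\mathfrak{g}$ whose locus is the set $\mathcal{Y}_{\mathfrak{g}}$ of solutions of the modified classical Yang–Baxter equation. Moreover, the functions $r\mapsto\xi([r,r])$, $\xi\in(\Lambda^3\mathfrak{g})^*$ (i.e. the components of $[r,r]$ in any basis of $\Lambda^3\mathfrak{g}$), span a linear Darboux family for $V_{\mathfrak{g}}$ on $\Lambda^2\mathfrak{g}$ whose locus is the set of solutions of the classical Yang–Baxter equation $[r,r]=0$.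
   Context: $[\cdot,\cdot]$ is the algebraic Schouten bracket on $\Lambda\mathfrak{g}$. $(\Lambda^m\mathfrak{g})^{\mathfrak{g}}=\{w\in\Lambda^m\mathfrak{g}:[v,w]=0\ \forall v\in\mathfrak{g}\}$. The modified classical Yang–Baxter equation (mCYBE) for $r\in\Lambda^2\mathfrak{g}$ is $[r,r]\in(\Lambda^3\mathfrak{g})^{\mathfrak{g}}$; its solutions are called $r$-matrices and form $\mathcal{Y}_{\mathfrak{g}}$. $V_{\mathfrak{g}}$ is the Lie algebra of fundamental vector fields of the action $T\mapsto\Lambda^2T$ of $\mathrm{Aut}(\mathfrak{g})$ on $\Lambda^2\mathfrak{g}$, namely $w\mapsto(\Lambda^2d)(w)$ for $d\in\mathfrak{der}(\mathfrak{g})$, where $\Lambda^2d(a\wedge b)=da\wedge b+a\wedge db$. A Darboux family for a Lie algebra $V$ of vector fields on $M$ is a finite-dimensional space $\mathcal{A}=\langle f_1,\dots,f_s\rangle$ of smooth functions with $Xf_j=\sum_i h^i_{jX}f_i$, $h^i_{jX}\in C^\infty(M)$, for all $X\in V$; it is linear if the cofactors can be taken constant; its locus is the common zero set of its elements. *)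

(* Defs.v *)
From HB Require Import structures.
From mathcomp Require Import all_boot all_order all_algebra.
From mathcomp Require Import classical_sets reals topology normedtype derive.
Set Implicit Arguments. Unset Strict Implicit. Unset Printing Implicit Defensive.
Import Order.TTheory GRing.Theory Num.Theory.
Local Open Scope ring_scope.

(* Coordinates.  g is a real Lie algebra of dimension n with basis e_0..e_{n-1}
   and structure constants c : [e_i, e_j] = \sum_k c i j k e_k.
   Lambda^2 g: skew-symmetric matrices r (r = \sum_{i<j} r i j e_i /\ e_j).
   Lambda^3 g: alternating 3-tensors w (w = \sum_{i<j<k} w i j k e_i/\e_j/\e_k),
   where x/\y/\z is identified with the alternation of x(x)y(x)z. *)

Definition tensor3 (R : realType) (n : nat) := 'I_n -> 'I_n -> 'I_n -> R.

Definition is_lie_str (R : realType) (n : nat) (c : tensor3 R n) : Prop :=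
  (forall i j k, c i j k = - c j i k) /\
  (forall i j l m,
     \sum_k (c i j k * c k l m + c j l k * c k i m + c l i k * c k j m) = 0).

Definition lbr (R : realType) (n : nat) (c : tensor3 R n) (x y : 'I_n -> R)
  : 'I_n -> R := fun k => \sum_i \sum_j x i * y j * c i j k.

(* action of a linear endomorphism d (matrix: d e_j = \sum_i d i j e_i) *)
Definition mapv (R : realType) (n : nat) (d : 'M[R]_n) (x : 'I_n -> R)
  : 'I_n -> R := fun i => \sum_j d i j * x j.

Definition is_derivation (R : realType) (n : nat) (c : tensor3 R n)
  (d : 'M[R]_n) : Prop :=
  forall x y : 'I_n -> R,
    mapv d (lbr c x y) = (fun k => lbr c (mapv d x) y k + lbr c x (mapv d y) k).

Definition skew2 (R : realType) (n : nat) (r : 'M[R]_n) : Prop :=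
  forall i j, r i j = - r j i.

Definition alt3 (R : realType) (n : nat) (w : tensor3 R n) : Prop :=
  forall i j k, w i j k = - w j i k /\ w i j k = - w i k j.

(* Lambda^2 d (a /\ b) = d a /\ b + a /\ d b, on components *)
Definition wedge2_der (R : realType) (n : nat) (d r : 'M[R]_n) : 'M[R]_n :=
  \matrix_(i, j) (\sum_k d i k * r k j + \sum_k d j k * r i k).

(* Schouten bracket [r, r] for r in Lambda^2 g (components of the trivector):
   [a/\b, c/\d] = [a,c]/\b/\d - [a,d]/\b/\c - [b,c]/\a/\d + [b,d]/\a/\c gives
   [r,r] = \sum r_ab r_cd [e_a,e_c] /\ e_b /\ e_d. *)
Definition schouten_rr (R : realType) (n : nat) (c : tensor3 R n)
  (r : 'M[R]_n) : tensor3 R n :=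
  let S := fun k b e => \sum_a \sum_a' c a a' k * r a b * r a' e in
  fun i j l => 2 * (S i j l + S j l i + S l i j).

(* Schouten bracket [v, w] for v in g, w in Lambda^3 g (= ad_v extended as a
   derivation); coefficient of e_k in [v, e_i] is \sum_a v a * c a i k. *)
Definition schouten_v3 (R : realType) (n : nat) (c : tensor3 R n)
  (v : 'I_n -> R) (w : tensor3 R n) : tensor3 R n :=
  let ad := fun i k => \sum_a v a * c a i k in
  fun k j l => \sum_i ad i k * w i j l + \sum_i ad i j * w k i l
             + \sum_i ad i l * w k j i.

Definition invariant3 (R : realType) (n : nat) (c : tensor3 R n)
  (w : tensor3 R n) : Prop :=
  alt3 w /\ forall (v : 'I_n -> R) i j l, schouten_v3 c v w i j l = 0.

(* a linear form on Lambda^3 g, given by a coefficient tensor u *)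
Definition pair3 (R : realType) (n : nat) (u w : tensor3 R n) : R :=
  \sum_i \sum_j \sum_l u i j l * w i j l.

Definition in_annihilator (R : realType) (n : nat) (c : tensor3 R n)
  (u : tensor3 R n) : Prop :=
  forall w, invariant3 c w -> pair3 u w = 0.

Definition mCYBE (R : realType) (n : nat) (c : tensor3 R n) (r : 'M[R]_n)
  : Prop := skew2 r /\ invariant3 c (schouten_rr c r).
Definition CYBE (R : realType) (n : nat) (c : tensor3 R n) (r : 'M[R]_n)
  : Prop := skew2 r /\ forall i j l, schouten_rr c r i j l = 0.

(* V_g : fundamental vector fields w |-> Lambda^2 d (w), d a derivation *)
Definition Vg (R : realType) (n : nat) (c : tensor3 R n)
  (X : 'M[R]_n -> 'M[R]_n) : Prop :=
  exists d, is_derivation c d /\ X = wedge2_der d.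

(* Linear Darboux family on the manifold M = {w | D w} (a linear subspace of
   the matrix space) for a family V of vector fields: A is the span of
   finitely many functions f_0..f_{s-1} and X f_j = \sum_i h_i f_i on M with
   constant cofactors h_i; X f (w) is the derivative of f along X at w. *)
Definition linear_darboux_family (R : realType) (n : nat)
  (D : 'M[R]_n -> Prop) (V : ('M[R]_n -> 'M[R]_n) -> Prop)
  (A : ('M[R]_n -> R) -> Prop) : Prop :=
  exists (s : nat) (fs : 'I_s -> 'M[R]_n -> R),
    (forall f, A f <-> exists a : 'I_s -> R, f = fun w => \sum_i a i * fs i w) /\
    (forall X, V X -> forall j : 'I_s, exists h : 'I_s -> R,
       forall w, D w ->
         is_derive (0 : R^o) (1 : R^o) (fun t : R^o => fs j (w + t *: X w) : R^o)
                   (\sum_i h i * fs i w)).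

Definition locus (R : realType) (n : nat) (D : 'M[R]_n -> Prop)
  (A : ('M[R]_n -> R) -> Prop) (w : 'M[R]_n) : Prop :=
  D w /\ forall f, A f -> f w = 0.

Definition mcybe_family (R : realType) (n : nat) (c : tensor3 R n)
  (f : 'M[R]_n -> R) : Prop :=
  exists u, in_annihilator c u /\ f = fun r => pair3 u (schouten_rr c r).

Definition cybe_family (R : realType) (n : nat) (c : tensor3 R n)
  (f : 'M[R]_n -> R) : Prop :=
  exists u, f = fun r => pair3 u (schouten_rr c r).

(* Main.v *)
Require Import Defs.
From HB Require Import structures.
From mathcomp Require Import all_boot all_order all_algebra.
From mathcomp Require Import classical_sets reals topology normedtype derive.
From mathcomp Require Import ring.
Set Implicit Arguments. Unset Strict Implicit. Unset Printing Implicit Defensive.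
Import Order.TTheory GRing.Theory Num.Theory.
Local Open Scope ring_scope.

Section S.
Variables (R : realType) (n : nat).
Local Notation T3 := (tensor3 R n).

Lemma ex3 (F : 'I_n -> 'I_n -> 'I_n -> R) :
  \sum_a \sum_b \sum_c F a b c = \sum_c \sum_a \sum_b F a b c.
Proof. under eq_bigr do rewrite exchange_big. by rewrite exchange_big. Qed.

Lemma ex4 (F : 'I_n -> 'I_n -> 'I_n -> 'I_n -> R) :
  \sum_a \sum_b \sum_c \sum_d F a b c d = \sum_d \sum_a \sum_b \sum_c F a b c d.
Proof. under eq_bigr do rewrite ex3. by rewrite exchange_big. Qed.

Definition dl (a i : 'I_n) : R := (i == a)%:R.

Lemma sum_dl a (F : 'I_n -> R) : \sum_i dl a i * F i = F a.
Proof.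
rewrite (bigD1 a) //= big1 => [|i /negbTE hi]; first by rewrite /dl eqxx mul1r addr0.
by rewrite /dl hi mul0r.
Qed.

Lemma sum_dlr a (F : 'I_n -> R) : \sum_i F i * dl a i = F a.
Proof. rewrite -[RHS](sum_dl a); apply: eq_bigr => i _; exact: mulrC. Qed.

Definition op1 (M : 'M[R]_n) (Z : T3) : T3 := fun k j l => \sum_i M k i * Z i j l.
Definition op2 (M : 'M[R]_n) (Z : T3) : T3 := fun k j l => \sum_i M j i * Z k i l.
Definition op3 (M : 'M[R]_n) (Z : T3) : T3 := fun k j l => \sum_i M l i * Z k j i.
Definition L3 (M : 'M[R]_n) (Z : T3) : T3 :=
  fun k j l => op1 M Z k j l + op2 M Z k j l + op3 M Z k j l.

Lemma adj1 u M Z : pair3 u (op1 M Z) = pair3 (op1 M^T u) Z.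
Proof.
rewrite /pair3 /op1.
under eq_bigr do under eq_bigr do under eq_bigr do rewrite mulr_sumr.
rewrite ex4.
under [RHS]eq_bigr do under eq_bigr do under eq_bigr do rewrite mulr_suml.
under [RHS]eq_bigr do rewrite ex3.
apply: eq_bigr => k _; apply: eq_bigr => i _; apply: eq_bigr => j _; apply: eq_bigr => l _.
rewrite mxE; ring.
Qed.

Lemma adj2 u M Z : pair3 u (op2 M Z) = pair3 (op2 M^T u) Z.
Proof.
rewrite /pair3 /op2.
under eq_bigr do under eq_bigr do under eq_bigr do rewrite mulr_sumr.
under eq_bigr do rewrite ex3.
under [RHS]eq_bigr do under eq_bigr do under eq_bigr do rewrite mulr_suml.
under eq_bigr do under eq_bigr do rewrite exchange_big.
apply: eq_bigr => k _; apply: eq_bigr => i _; apply: eq_bigr => j _; apply: eq_bigr => l _.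
rewrite mxE; ring.
Qed.

Lemma adj3 u M Z : pair3 u (op3 M Z) = pair3 (op3 M^T u) Z.
Proof.
rewrite /pair3 /op3.
under eq_bigr do under eq_bigr do under eq_bigr do rewrite mulr_sumr.
under [RHS]eq_bigr do under eq_bigr do under eq_bigr do rewrite mulr_suml.
under eq_bigr do under eq_bigr do rewrite exchange_big.
apply: eq_bigr => k _; apply: eq_bigr => i _; apply: eq_bigr => j _; apply: eq_bigr => l _.
rewrite mxE; ring.
Qed.

Lemma pair3D u (Z1 Z2 Z3 : T3) :
  pair3 u (fun i j l => Z1 i j l + Z2 i j l + Z3 i j l) =
  pair3 u Z1 + pair3 u Z2 + pair3 u Z3.
Proof.
rewrite /pair3 -!big_split /=; apply: eq_bigr => i _.
rewrite -!big_split /=; apply: eq_bigr => j _.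
rewrite -!big_split /=; apply: eq_bigr => l _; ring.
Qed.

Lemma pair3Dl (u1 u2 u3 Z : T3) :
  pair3 (fun i j l => u1 i j l + u2 i j l + u3 i j l) Z =
  pair3 u1 Z + pair3 u2 Z + pair3 u3 Z.
Proof.
rewrite /pair3 -!big_split /=; apply: eq_bigr => i _.
rewrite -!big_split /=; apply: eq_bigr => j _.
rewrite -!big_split /=; apply: eq_bigr => l _; ring.
Qed.

Lemma adj u M Z : pair3 u (L3 M Z) = pair3 (L3 M^T u) Z.
Proof. by rewrite /L3 pair3D pair3Dl adj1 adj2 adj3. Qed.


Lemma sum_dl_mid (X : R) a (F : 'I_n -> R) : \sum_j X * dl a j * F j = X * F a.
Proof. under eq_bigr do rewrite -mulrA. by rewrite -mulr_sumr sum_dl. Qed.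

Lemma sum2_dl a b (F : 'I_n -> 'I_n -> R) :
  \sum_i \sum_j dl a i * dl b j * F i j = F a b.
Proof. under eq_bigr do rewrite sum_dl_mid. by rewrite sum_dl. Qed.

Lemma sum2_dl2 a b (G F : 'I_n -> 'I_n -> R) :
  \sum_i \sum_j (\sum_k G i k * dl a k) * dl b j * F i j = \sum_i G i a * F i b.
Proof. apply: eq_bigr => i _; by rewrite sum_dlr sum_dl_mid. Qed.

Lemma sum2_dl3 a b (G F : 'I_n -> 'I_n -> R) :
  \sum_i \sum_j dl a i * (\sum_k G j k * dl b k) * F i j = \sum_j G j b * F a j.
Proof.
under eq_bigr do under eq_bigr do rewrite sum_dlr -mulrA.
under eq_bigr do rewrite -mulr_sumr.
by rewrite sum_dl.
Qed.

Lemma der_coord (c : T3) d : is_derivation c d ->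
  forall a b m, \sum_k d m k * c a b k =
     \sum_i d i a * c i b m + \sum_j d j b * c a j m.
Proof.
move=> hd a b m.
move: (congr1 (fun f => f m) (hd (dl a) (dl b))); rewrite /mapv /lbr /=.
under eq_bigr do rewrite sum2_dl.
by rewrite sum2_dl2 sum2_dl3.
Qed.

Definition S2 (c : T3) (r s : 'M[R]_n) : T3 :=
  fun k b e => \sum_a \sum_a' c a a' k * r a b * s a' e.

Lemma Qdef c r i j l :
  schouten_rr c r i j l = 2 * (S2 c r r i j l + S2 c r r j l i + S2 c r r l i j).
Proof. by []. Qed.

Lemma L3_S2 c d r : is_derivation c d -> forall k b e,
  L3 d (S2 c r r) k b e =
  S2 c (wedge2_der d r) r k b e + S2 c r (wedge2_der d r) k b e.
Proof.
move=> hd k b e.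
pose T1 := \sum_a \sum_a' \sum_m c a a' k * d a m * r m b * r a' e.
pose T2 := \sum_a \sum_a' \sum_m c a a' k * d b m * r a m * r a' e.
pose T3 := \sum_a \sum_a' \sum_m c a a' k * r a b * d a' m * r m e.
pose T4 := \sum_a \sum_a' \sum_m c a a' k * r a b * d e m * r a' m.
have E2 : forall x y (F G : 'I_n -> R),
    x * (\sum_m F m + \sum_m G m) * y = \sum_m (x * F m * y) + \sum_m (x * G m * y).
  by move=> x y F G; rewrite mulrDr mulrDl !mulr_sumr !mulr_suml.
have E3 : forall x (F G : 'I_n -> R),
    x * (\sum_m F m + \sum_m G m) = \sum_m (x * F m) + \sum_m (x * G m).
  by move=> x F G; rewrite mulrDr !mulr_sumr.
have hY1 : S2 c (wedge2_der d r) r k b e = T1 + T2.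
  rewrite /S2 /T1 /T2 -big_split; apply: eq_bigr => a _.
  rewrite -big_split; apply: eq_bigr => a' _.
  rewrite mxE E2; congr (_ + _); apply: eq_bigr => m _; ring.
have hY2 : S2 c r (wedge2_der d r) k b e = T3 + T4.
  rewrite /S2 /T3 /T4 -big_split; apply: eq_bigr => a _.
  rewrite -big_split; apply: eq_bigr => a' _.
  rewrite mxE E3; congr (_ + _); apply: eq_bigr => m _; ring.
have h1 : op1 d (S2 c r r) k b e = T1 + T3.
  rewrite /op1 /S2.
  under eq_bigr do rewrite mulr_sumr.
  under eq_bigr do under eq_bigr do rewrite mulr_sumr.
  rewrite ex3 ex3.
  transitivity (\sum_a \sum_a' ((\sum_m d k m * c a a' m) * (r a b * r a' e))).
    apply: eq_bigr => a _; apply: eq_bigr => a' _.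
    rewrite mulr_suml; apply: eq_bigr => m _; ring.
  under eq_bigr do under eq_bigr do rewrite der_coord // mulrDl !mulr_suml.
  under eq_bigr do rewrite big_split /=.
  rewrite big_split /=; congr (_ + _).
    rewrite /T1 ex3; apply: eq_bigr => a _; rewrite exchange_big.
    apply: eq_bigr => a' _; apply: eq_bigr => m _; ring.
  rewrite /T3; apply: eq_bigr => a _; rewrite exchange_big.
  apply: eq_bigr => a' _; apply: eq_bigr => m _; ring.
have h2 : op2 d (S2 c r r) k b e = T2.
  rewrite /op2 /S2.
  under eq_bigr do rewrite mulr_sumr.
  under eq_bigr do under eq_bigr do rewrite mulr_sumr.
  rewrite ex3 ex3 /T2.
  apply: eq_bigr => a _; apply: eq_bigr => a' _; apply: eq_bigr => m _; ring.
have h3 : op3 d (S2 c r r) k b e = T4.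
  rewrite /op3 /S2.
  under eq_bigr do rewrite mulr_sumr.
  under eq_bigr do under eq_bigr do rewrite mulr_sumr.
  rewrite ex3 ex3 /T4.
  apply: eq_bigr => a _; apply: eq_bigr => a' _; apply: eq_bigr => m _; ring.
rewrite /L3 h1 h2 h3 hY1 hY2; ring.
Qed.

Lemma L3_cyc d (Z : T3) k j l :
  L3 d (fun i j l => 2 * (Z i j l + Z j l i + Z l i j)) k j l =
  2 * (L3 d Z k j l + L3 d Z j l k + L3 d Z l k j).
Proof.
have E : forall (x f g h : 'I_n -> R), \sum_i x i * (2 * (f i + g i + h i)) =
    2 * (\sum_i x i * f i + \sum_i x i * g i + \sum_i x i * h i).
  move=> x f g h; rewrite -!big_split mulr_sumr; apply: eq_bigr => i _ /=; ring.
rewrite /L3 /op1 /op2 /op3 !E; ring.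
Qed.

Lemma sum2_quad (A B C D : 'I_n -> 'I_n -> R) (t : R) :
  \sum_a \sum_a' (A a a' + t * (B a a' + C a a') + t ^+ 2 * D a a') =
  \sum_a \sum_a' A a a' + t * (\sum_a \sum_a' B a a' + \sum_a \sum_a' C a a')
  + t ^+ 2 * \sum_a \sum_a' D a a'.
Proof.
under eq_bigr do rewrite big_split big_split /= -!mulr_sumr big_split /=.
by rewrite big_split big_split /= -!mulr_sumr big_split /=.
Qed.

Lemma S2_exp c r Y (t : R) k b e :
  S2 c (r + t *: Y) (r + t *: Y) k b e =
  S2 c r r k b e + t * (S2 c Y r k b e + S2 c r Y k b e) + t ^+ 2 * S2 c Y Y k b e.
Proof.
rewrite /S2 -sum2_quad; apply: eq_bigr => a _; apply: eq_bigr => a' _.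
rewrite !mxE; ring.
Qed.

Lemma pair3_quad u (Z Z0 Z1 Z2 : T3) (t : R) :
  (forall i j l, Z i j l = Z0 i j l + t * Z1 i j l + t ^+ 2 * Z2 i j l) ->
  pair3 u Z = pair3 u Z0 + t * pair3 u Z1 + t ^+ 2 * pair3 u Z2.
Proof.
move=> hZ; rewrite /pair3 !mulr_sumr -!big_split; apply: eq_bigr => i _ /=.
rewrite !mulr_sumr -!big_split; apply: eq_bigr => j _ /=.
rewrite !mulr_sumr -!big_split; apply: eq_bigr => l _ /=.
rewrite hZ; ring.
Qed.

Lemma quad_der (a b e : R) (f : R^o -> R^o) :
  (forall t, f t = a + t * b + t ^+ 2 * e) -> is_derive (0 : R^o) (1 : R^o) f b.
Proof.
move=> hf.
have -> : f = horner (a%:P + b *: 'X + e *: 'X^2).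
  apply: boolp.funext => t; rewrite hf !hornerE /=.
  move: (t : R) => x. rewrite expr2. ring.
have H := is_derive_poly (a%:P + b *: 'X + e *: 'X^2) (0:R).
have E : (poly.deriv (a%:P + b *: 'X + e *: 'X^2)).[0] = b.
  rewrite !poly.derivE !hornerE /=. ring.
rewrite E in H. exact: H.
Qed.

Lemma key c d u w : is_derivation c d ->
  is_derive (0 : R^o) (1 : R^o)
    (fun t : R^o => pair3 u (schouten_rr c (w + t *: wedge2_der d w)) : R^o)
    (pair3 (L3 d^T u) (schouten_rr c w)).
Proof.
move=> hd; rewrite -adj.
apply: (@quad_der (pair3 u (schouten_rr c w)) _
   (pair3 u (schouten_rr c (wedge2_der d w)))) => t.
apply: pair3_quad => i j l.
have -> : L3 d (schouten_rr c w) i j l =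
  2 * (L3 d (S2 c w w) i j l + L3 d (S2 c w w) j l i + L3 d (S2 c w w) l i j) :=
  L3_cyc d (S2 c w w) i j l.
rewrite !Qdef !S2_exp !L3_S2 //.
move: (t : R) => x; ring.
Qed.

Lemma opD1 M (X Y W : T3) k j l :
  op1 M (fun a b e => X a b e + Y a b e + W a b e) k j l =
  op1 M X k j l + op1 M Y k j l + op1 M W k j l.
Proof. rewrite /op1 -!big_split; apply: eq_bigr => i _ /=; ring. Qed.
Lemma opD2 M (X Y W : T3) k j l :
  op2 M (fun a b e => X a b e + Y a b e + W a b e) k j l =
  op2 M X k j l + op2 M Y k j l + op2 M W k j l.
Proof. rewrite /op2 -!big_split; apply: eq_bigr => i _ /=; ring. Qed.
Lemma opD3 M (X Y W : T3) k j l :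
  op3 M (fun a b e => X a b e + Y a b e + W a b e) k j l =
  op3 M X k j l + op3 M Y k j l + op3 M W k j l.
Proof. rewrite /op3 -!big_split; apply: eq_bigr => i _ /=; ring. Qed.

Lemma c12 M N Z k j l : op1 M (op2 N Z) k j l = op2 N (op1 M Z) k j l.
Proof.
rewrite /op1 /op2; under eq_bigr do rewrite mulr_sumr.
under [RHS]eq_bigr do rewrite mulr_sumr.
rewrite exchange_big; apply: eq_bigr => a _; apply: eq_bigr => b _; ring.
Qed.
Lemma c13 M N Z k j l : op1 M (op3 N Z) k j l = op3 N (op1 M Z) k j l.
Proof.
rewrite /op1 /op3; under eq_bigr do rewrite mulr_sumr.
under [RHS]eq_bigr do rewrite mulr_sumr.
rewrite exchange_big; apply: eq_bigr => a _; apply: eq_bigr => b _; ring.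
Qed.
Lemma c23 M N Z k j l : op2 M (op3 N Z) k j l = op3 N (op2 M Z) k j l.
Proof.
rewrite /op2 /op3; under eq_bigr do rewrite mulr_sumr.
under [RHS]eq_bigr do rewrite mulr_sumr.
rewrite exchange_big; apply: eq_bigr => a _; apply: eq_bigr => b _; ring.
Qed.

Lemma s1 M N Z k j l : op1 M (op1 N Z) k j l = op1 (M *m N) Z k j l.
Proof.
rewrite /op1; under eq_bigr do rewrite mulr_sumr.
rewrite exchange_big; apply: eq_bigr => m _; rewrite mxE mulr_suml.
apply: eq_bigr => i _; ring.
Qed.
Lemma s2 M N Z k j l : op2 M (op2 N Z) k j l = op2 (M *m N) Z k j l.
Proof.
rewrite /op2; under eq_bigr do rewrite mulr_sumr.
rewrite exchange_big; apply: eq_bigr => m _; rewrite mxE mulr_suml.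
apply: eq_bigr => i _; ring.
Qed.
Lemma s3 M N Z k j l : op3 M (op3 N Z) k j l = op3 (M *m N) Z k j l.
Proof.
rewrite /op3; under eq_bigr do rewrite mulr_sumr.
rewrite exchange_big; apply: eq_bigr => m _; rewrite mxE mulr_suml.
apply: eq_bigr => i _; ring.
Qed.

Lemma b1 A B Z k j l : op1 (A - B) Z k j l = op1 A Z k j l - op1 B Z k j l.
Proof. rewrite /op1 -sumrB; apply: eq_bigr => i _; rewrite !mxE; ring. Qed.
Lemma b2 A B Z k j l : op2 (A - B) Z k j l = op2 A Z k j l - op2 B Z k j l.
Proof. rewrite /op2 -sumrB; apply: eq_bigr => i _; rewrite !mxE; ring. Qed.
Lemma b3 A B Z k j l : op3 (A - B) Z k j l = op3 A Z k j l - op3 B Z k j l.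
Proof. rewrite /op3 -sumrB; apply: eq_bigr => i _; rewrite !mxE; ring. Qed.

Lemma L3_comm M N Z k j l :
  L3 M (L3 N Z) k j l = L3 N (L3 M Z) k j l + L3 (M *m N - N *m M) Z k j l.
Proof.
rewrite /L3 !opD1 !opD2 !opD3 !c12 !c13 !c23 !s1 !s2 !s3 !b1 !b2 !b3; ring.
Qed.

Lemma L3N M Z k j l : L3 (- M) Z k j l = - L3 M Z k j l.
Proof.
rewrite /L3 /op1 /op2 /op3 .
have E : forall (f g h : 'I_n -> R), - (\sum_i f i + \sum_i g i + \sum_i h i) =
  \sum_i - f i + \sum_i - g i + \sum_i - h i by move=> f g h; rewrite !sumrN; ring.
rewrite E; congr (_ + _ + _); apply: eq_bigr => i _; rewrite mxE; ring.
Qed.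

Lemma L3_zero M (Z : T3) k j l : (forall a b e, Z a b e = 0) -> L3 M Z k j l = 0.
Proof.
move=> hZ; rewrite /L3 /op1 /op2 /op3 !big1 ?addr0 // => i _; by rewrite hZ mulr0.
Qed.

Definition adm (c : T3) (v : 'I_n -> R) : 'M[R]_n := \matrix_(k, i) \sum_a v a * c a i k.

Lemma sch_L3 c v w k j l : schouten_v3 c v w k j l = L3 (adm c v) w k j l.
Proof.
rewrite /schouten_v3 /L3 /op1 /op2 /op3.
by congr (_ + _ + _); apply: eq_bigr => i _; rewrite mxE.
Qed.

Lemma adm_der c d v : is_derivation c d ->
  adm c v *m d - d *m adm c v = - adm c (mapv d v).
Proof.
move=> hd; apply/matrixP => k i.
rewrite (_ : (adm c v *m d - d *m adm c v) k i =
   (adm c v *m d) k i - (d *m adm c v) k i); last by rewrite !mxE.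
rewrite (_ : (- adm c (mapv d v)) k i = - adm c (mapv d v) k i); last by rewrite !mxE.
have -> : (d *m adm c v) k i = \sum_a v a * \sum_m d k m * c a i m.
  rewrite mxE; under eq_bigr do rewrite mxE mulr_sumr.
  rewrite exchange_big; apply: eq_bigr => a _; rewrite mulr_sumr.
  apply: eq_bigr => m _; ring.
under [X in _ - X]eq_bigr do rewrite der_coord // mulrDr.
rewrite big_split /=.
have -> : (adm c v *m d) k i = \sum_a v a * \sum_j d j i * c a j k.
  rewrite mxE; under eq_bigr do rewrite mxE mulr_suml.
  rewrite exchange_big; apply: eq_bigr => a _; rewrite mulr_sumr.
  apply: eq_bigr => m _; ring.
have -> : adm c (mapv d v) k i = \sum_a v a * \sum_p d p a * c p i k.
  rewrite mxE /mapv; under eq_bigr do rewrite mulr_suml.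
  rewrite exchange_big; apply: eq_bigr => a _; rewrite mulr_sumr.
  apply: eq_bigr => m _; ring.
ring.
Qed.

Lemma inv_L3 c d w : is_derivation c d -> invariant3 c w -> invariant3 c (L3 d w).
Proof.
move=> hd [halt hinv]; split.
  move=> i j k.
  have hw : forall a b e, w a b e = - w b a e /\ w a b e = - w a e b := halt.
  split.
    rewrite /L3 /op1 /op2 /op3.
    have -> : \sum_m d j m * w m i k = - \sum_m d j m * w i m k.
      rewrite -sumrN; apply: eq_bigr => m _; rewrite (proj1 (hw m i k)); ring.
    have -> : \sum_m d i m * w j m k = - \sum_m d i m * w m j k.
      rewrite -sumrN; apply: eq_bigr => m _; rewrite (proj1 (hw j m k)); ring.
    have -> : \sum_m d k m * w j i m = - \sum_m d k m * w i j m.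
      rewrite -sumrN; apply: eq_bigr => m _; rewrite (proj1 (hw j i m)); ring.
    ring.
  rewrite /L3 /op1 /op2 /op3.
  have -> : \sum_m d i m * w m k j = - \sum_m d i m * w m j k.
    rewrite -sumrN; apply: eq_bigr => m _; rewrite (proj2 (hw m k j)); ring.
  have -> : \sum_m d k m * w i m j = - \sum_m d k m * w i j m.
    rewrite -sumrN; apply: eq_bigr => m _; rewrite (proj2 (hw i m j)); ring.
  have -> : \sum_m d j m * w i k m = - \sum_m d j m * w i m k.
    rewrite -sumrN; apply: eq_bigr => m _; rewrite (proj2 (hw i k m)); ring.
  ring.
move=> v i j l.
rewrite sch_L3 L3_comm adm_der // L3N -sch_L3.
rewrite (@L3_zero d (L3 (adm c v) w)); last by move=> a b e; rewrite -sch_L3 hinv.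
by rewrite hinv oppr0 add0r.
Qed.

Lemma ann_L3 c d u : is_derivation c d -> in_annihilator c u ->
  in_annihilator c (L3 d^T u).
Proof. move=> hd hu w hw; rewrite -adj; apply: hu; exact: inv_L3. Qed.

Definition Ix := ('I_n * 'I_n * 'I_n)%type.
Definition ev (k : 'I_#|{: Ix}|) : Ix := enum_val k.
Definition tv (u : T3) (p : Ix) : R := u p.1.1 p.1.2 p.2.

Lemma sum3_enum (F : 'I_n -> 'I_n -> 'I_n -> R) :
  \sum_i \sum_j \sum_l F i j l = \sum_(k < #|{: Ix}|) tv F (ev k).
Proof.
rewrite pair_bigA /= pair_bigA /=.
rewrite (big_enum_val (A := {: Ix})) /=.
by apply: eq_bigr.
Qed.

Local Notation N := #|{: Ix}|.
Definition vec (u : T3) : 'rV[R]_N := \row_k tv u (ev k).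
Definition unvec (x : 'rV[R]_N) : T3 := fun i j l => x 0 (enum_rank ((i, j, l) : Ix)).

Lemma vec_unvec x : vec (unvec x) = x.
Proof.
apply/matrixP => i k; rewrite mxE /tv /unvec (ord1 i).
by case E: (ev k) => [[a b] e] /=; rewrite -E /ev enum_valK.
Qed.

Lemma vecE u i j l : vec u 0 (enum_rank ((i, j, l) : Ix)) = u i j l.
Proof. by rewrite mxE /ev enum_rankK. Qed.

Lemma pair3_vec u w : pair3 u w = \sum_k vec u 0 k * vec w 0 k.
Proof.
rewrite /pair3 sum3_enum; apply: eq_bigr => k _; by rewrite !mxE.
Qed.

Lemma dual M (B : 'M[R]_(M, N)) (u : 'rV[R]_N) :
  (forall w : 'rV[R]_N, w *m B^T = 0 -> u *m w^T = 0) -> exists x : 'rV[R]_M, u = x *m B.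
Proof.
move=> H.
suff: (u <= B)%MS by case/submxP => x ->; exists x.
rewrite submxE; apply/eqP/matrixP => i k.
set C := cokermx B.
have hBC := mulmx_coker B.
have h := H (\row_j C j k).
have : (\row_j C j k) *m B^T = 0.
  apply/matrixP => a m.
  transitivity ((B *m C) m k); last by rewrite hBC !mxE.
  by rewrite !mxE; apply: eq_bigr => j _; rewrite !mxE mulrC.
move/h => /(congr1 (fun A : 'M_1 => A 0 0)); rewrite !mxE => E.
rewrite (ord1 i) -[RHS]E.
by apply: eq_bigr => j _; rewrite !mxE.
Qed.

Definition lc s (a : 'I_s -> R) (b : 'I_s -> T3) : T3 :=
  fun x y z => \sum_i a i * b i x y z.

Lemma pair3_lc s (a : 'I_s -> R) b w : pair3 (lc a b) w = \sum_i a i * pair3 (b i) w.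
Proof.
rewrite /pair3 /lc.
under eq_bigr do under eq_bigr do under eq_bigr do rewrite mulr_suml.
under eq_bigr do under eq_bigr do rewrite exchange_big.
under eq_bigr do rewrite exchange_big.
rewrite exchange_big.
under [RHS]eq_bigr do rewrite mulr_sumr.
under [RHS]eq_bigr do under eq_bigr do rewrite mulr_sumr.
under [RHS]eq_bigr do under eq_bigr do under eq_bigr do rewrite mulr_sumr.
apply: eq_bigr => i _; apply: eq_bigr => x _; apply: eq_bigr => y _;
  apply: eq_bigr => z _; ring.
Qed.

Definition d3 (p : Ix) : T3 := fun x y z => dl p.1.1 x * dl p.1.2 y * dl p.2 z.

Lemma pair3_d3 p w : pair3 (d3 p) w = tv w p.
Proof.
rewrite /pair3 /d3 /tv.
under eq_bigr do under eq_bigr do rewrite sum_dl_mid.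
under eq_bigr do rewrite sum_dl_mid.
by rewrite sum_dl.
Qed.

Lemma pair3_add (u1 u2 w : T3) :
  pair3 (fun x y z => u1 x y z + u2 x y z) w = pair3 u1 w + pair3 u2 w.
Proof.
rewrite /pair3 -!big_split; apply: eq_bigr => i _ /=.
rewrite -!big_split; apply: eq_bigr => j _ /=.
rewrite -!big_split; apply: eq_bigr => l _ /=; ring.
Qed.

Lemma pA (F : 'I_n -> R) j l w :
  pair3 (fun x y z => F x * dl j y * dl l z) w = \sum_x F x * w x j l.
Proof.
rewrite /pair3; apply: eq_bigr => x _.
under eq_bigr do rewrite sum_dl_mid.
by rewrite sum_dl_mid.
Qed.

Lemma pB (F : 'I_n -> R) k l w :
  pair3 (fun x y z => F y * dl k x * dl l z) w = \sum_y F y * w k y l.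
Proof.
rewrite /pair3.
under eq_bigr do under eq_bigr do rewrite sum_dl_mid.
transitivity (\sum_x dl k x * \sum_y F y * w x y l).
  apply: eq_bigr => x _; rewrite mulr_sumr; apply: eq_bigr => y _; ring.
by rewrite sum_dl.
Qed.

Lemma pC (F : 'I_n -> R) k j w :
  pair3 (fun x y z => F z * dl k x * dl j y) w = \sum_z F z * w k j z.
Proof.
rewrite /pair3.
transitivity (\sum_x \sum_y dl k x * dl j y * \sum_z F z * w x y z).
  apply: eq_bigr => x _; apply: eq_bigr => y _; rewrite mulr_sumr.
  apply: eq_bigr => z _; ring.
under eq_bigr do rewrite sum_dl_mid.
by rewrite sum_dl.
Qed.

Definition sv (c : T3) a k j l : T3 := fun x y z =>
  c a x k * dl j y * dl l z + c a y j * dl k x * dl l z + c a z l * dl k x * dl j y.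

Definition G (c : T3) a (w : T3) k j l : R :=
  \sum_i c a i k * w i j l + \sum_i c a i j * w k i l + \sum_i c a i l * w k j i.

Lemma pair3_sv c a k j l w : pair3 (sv c a k j l) w = G c a w k j l.
Proof.
rewrite /sv pair3Dl.
by rewrite (pA (fun x => c a x k)) (pB (fun y => c a y j)) (pC (fun z => c a z l)).
Qed.

Lemma sch_lin c v w k j l : schouten_v3 c v w k j l = \sum_a v a * G c a w k j l.
Proof.
have hlin : forall (f : 'I_n -> 'I_n -> R) (g : 'I_n -> R),
    \sum_i (\sum_a v a * f a i) * g i = \sum_a v a * \sum_i f a i * g i.
  move=> f g; under eq_bigr do rewrite mulr_suml.
  rewrite exchange_big; apply: eq_bigr => a _; rewrite mulr_sumr.
  apply: eq_bigr => i _; ring.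
rewrite /schouten_v3 /= !hlin /G -!big_split; apply: eq_bigr => a _ /=; ring.
Qed.

Lemma sch_dl c a w k j l : schouten_v3 c (dl a) w k j l = G c a w k j l.
Proof. by rewrite sch_lin sum_dl. Qed.

Definition Fx := (Ix + Ix + 'I_n * Ix)%type.

Definition bF (c : T3) (f : Fx) : T3 :=
  match f with
  | inl (inl p) => fun x y z => d3 p x y z + d3 (p.1.2, p.1.1, p.2) x y z
  | inl (inr p) => fun x y z => d3 p x y z + d3 (p.1.1, p.2, p.1.2) x y z
  | inr q => sv c q.1 q.2.1.1 q.2.1.2 q.2.2
  end.

Lemma inv_char c w : invariant3 c w <-> forall f : Fx, pair3 (bF c f) w = 0.
Proof.
split.
  move=> [halt hinv] [[[[a b] e]|[[a b] e]]|[a [[k j] l]]] /=.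
  - rewrite pair3_add !pair3_d3 /tv /=; rewrite (proj1 (halt a b e)); ring.
  - rewrite pair3_add !pair3_d3 /tv /=; rewrite (proj2 (halt a b e)); ring.
  - by rewrite pair3_sv -sch_dl hinv.
move=> H; split.
  move=> a b e; split.
    have := H (inl (inl (a, b, e))); rewrite /= pair3_add !pair3_d3 /tv /= => E.
    by apply/eqP; rewrite -addr_eq0; apply/eqP.
  have := H (inl (inr (a, b, e))); rewrite /= pair3_add !pair3_d3 /tv /= => E.
  by apply/eqP; rewrite -addr_eq0; apply/eqP.
move=> v k j l; rewrite sch_lin big1 // => a _.
have := H (inr (a, (k, j, l))); rewrite /= pair3_sv => ->; by rewrite mulr0.
Qed.

Local Notation NF := #|{: Fx}|.
Definition bW (c : T3) (m : 'I_NF) : T3 := bF c (enum_val m).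

Lemma ann_char c u : in_annihilator c u <-> exists a : 'I_NF -> R, u = lc a (bW c).
Proof.
split; last first.
  move=> [a ->] w /inv_char hw; rewrite pair3_lc big1 // => m _.
  by rewrite /bW hw mulr0.
move=> hu.
pose B : 'M[R]_(NF, N) := \matrix_(m, k) vec (bW c m) 0 k.
have [x hx] : exists x : 'rV[R]_NF, vec u = x *m B.
  apply: dual => w hw.
  have hinv : invariant3 c (unvec w).
    apply/inv_char => f.
    have := congr1 (fun A : 'M_(1, NF) => A 0 (enum_rank f)) hw.
    rewrite !mxE => E; rewrite -[RHS]E pair3_vec vec_unvec.
    apply: eq_bigr => k _; rewrite !mxE /bW enum_rankK; ring.
  have := hu _ hinv; rewrite pair3_vec vec_unvec => E.
  apply/matrixP => i j; rewrite (ord1 i) (ord1 j) !mxE -[RHS]E.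
  by apply: eq_bigr => k _; rewrite !mxE.
exists (fun m => x 0 m).
apply: boolp.funext => i; apply: boolp.funext => j; apply: boolp.funext => l.
have := congr1 (fun A : 'rV_N => A 0 (enum_rank ((i, j, l) : Ix))) hx.
rewrite vecE => ->; rewrite mxE /lc; apply: eq_bigr => m _.
by rewrite mxE vecE.
Qed.

Lemma lc_delta s (b : 'I_s -> T3) j : b j = lc (fun i => (i == j)%:R) b.
Proof.
apply: boolp.funext => x; apply: boolp.funext => y; apply: boolp.funext => z.
rewrite /lc (bigD1 j) //= big1 => [|i /negbTE hi]; first by rewrite eqxx mul1r addr0.
by rewrite hi mul0r.
Qed.

Lemma darboux_gen c (A : ('M[R]_n -> R) -> Prop) (P : T3 -> Prop) s (b : 'I_s -> T3) :
  (forall f, A f <-> exists u, P u /\ f = fun r => pair3 u (schouten_rr c r)) ->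
  (forall u, P u <-> exists a, u = lc a b) ->
  (forall d, is_derivation c d -> forall u, P u -> P (L3 d^T u)) ->
  linear_darboux_family (@skew2 R n) (Vg c) A.
Proof.
move=> hA hP hcl.
exists s, (fun i r => pair3 (b i) (schouten_rr c r)); split.
  move=> f; rewrite hA; split.
    move=> [u [/hP [a ->] ->]]; exists a; apply: boolp.funext => r.
    by rewrite pair3_lc.
  move=> [a ->]; exists (lc a b); split; first by apply/hP; exists a.
  by apply: boolp.funext => r; rewrite pair3_lc.
move=> X [d [hd ->]] j.
have hb : P (b j) by apply/hP; exists (fun i => (i == j)%:R); exact: lc_delta.
have [h hh] : exists h, L3 d^T (b j) = lc h b by apply/hP; exact: hcl.
exists h => w _.
have := key (b j) w hd; rewrite hh pair3_lc; exact.
Qed.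

Lemma dlC a i : dl a i = dl i a.
Proof. by rewrite /dl eq_sym. Qed.

Lemma u_decomp (u : T3) : u = lc (fun k => tv u (ev k)) (fun k => d3 (ev k)).
Proof.
apply: boolp.funext => x; apply: boolp.funext => y; apply: boolp.funext => z.
rewrite /lc.
have -> : \sum_i tv u (ev i) * d3 (ev i) x y z =
  \sum_i tv (fun x' y' z' => u x' y' z' * d3 (x', y', z') x y z) (ev i).
  by apply: eq_bigr => i _.
rewrite -sum3_enum.
have := pair3_d3 (x, y, z) u; rewrite /tv /= => <-.
rewrite /pair3 /d3 /=; apply: eq_bigr => a _; apply: eq_bigr => b _;
  apply: eq_bigr => e _.
rewrite (dlC x) (dlC y) (dlC z); ring.
Qed.

End S.

Theorem proposition5p3 (R : realType) (n : nat) (c : tensor3 R n) :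
  is_lie_str c ->
  (linear_darboux_family (@skew2 R n) (Vg c) (mcybe_family c) /\
   (forall r, locus (@skew2 R n) (mcybe_family c) r <-> mCYBE c r)) /\
  (linear_darboux_family (@skew2 R n) (Vg c) (cybe_family c) /\
   (forall r, locus (@skew2 R n) (cybe_family c) r <-> CYBE c r)).
Proof.
move=> _; split; split.
- apply: (@darboux_gen R n c _ (in_annihilator c) _ (bW c)).
  + by move=> f.
  + exact: ann_char.
  + by move=> d hd u; apply: ann_L3.
- move=> r; split.
    move=> [hs hf]; split => //.
    apply/inv_char => f.
    apply: (hf (fun r => pair3 (bF c f) (schouten_rr c r))).
    exists (bF c f); split => //.
    by move=> w /inv_char; apply.
  move=> [hs hinv]; split => // f [u [hu ->]]; exact: hu.
- apply: (@darboux_gen R n c _ (fun _ => True) _ (fun k => @d3 R n (@ev n k))).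
  + move=> f; split; first by move=> [u ->]; exists u.
    by move=> [u [_ ->]]; exists u.
  + by move=> u; split => // _; exists (fun k => tv u (ev k)); exact: u_decomp.
  + by [].
- move=> r; split.
    move=> [hs hf]; split => // i j l.
    have := hf _ (ex_intro _ (@d3 R n ((i, j, l) : Ix n)) erefl).
    by rewrite /= pair3_d3.
  move=> [hs h0]; split => // f [u ->] /=.
  rewrite /pair3 big1 // => i _; rewrite big1 // => j _; rewrite big1 // => l _.
  by rewrite h0 mulr0.
Qed.
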